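(* Let $n \ge 2$ and let $K_n$ be the complete graph on $n$ vertices (the interaction graph of a dense one-body Fermionic Hamiltonian on $n$ sites). Then: (i) $d_{\mathrm{swap}}(K_n) = n-2$, and there exists a swap network for $K_n$ with swap depth $n-2$ and $n$ interaction layers; (ii) if $n$ is odd, every swap network for $K_n$ has at least $n$ interaction layers (so $n$ interaction layers is optimal); (iii) if $n$ is even and $n > 2$, the minimum number of interaction layers over all swap networks for $K_n$ is $n-1$, and no swap network for $K_n$ has simultaneously swap depth $n-2$ and $n-1$ interaction layers.
   Context: Linear-connectivity swap network model. Let $G=(V,E)$ be a finite graph with $|V|=n$. Qubits occupy positions $0,1,\ldots,n-1$ on a line. A configuration is a bijection $\pi: V \to \{0,\ldots,n-1\}$. A swap layer is a set of pairwise disjoint pairs of adjacent positions $\{i,i+1\}$; applying it to a configuration exchanges the vertices located at the two positions of each pair. A swap network for $G$ consists of an initial configuration $\pi_0$ (chosen freely) and a sequence of swap layers $L_1,\ldots,L_d$, producing configurations $\pi_0,\pi_1,\ldots,\pi_d$, together with a sequence of interaction layers, each attached to some configuration $\pi_t$ (several interaction layers may be attached to the same configuration); an interaction layer at $\pi_t$ is a set of pairwise disjoint edges $\{v,w\}\in E$ with $|\pi_t(v)-\pi_t(w)|=1$ (so each vertex takes part in at most one interaction per layer). It is required that every edge of $G$ belongs to some interaction layer. The swap depth of the network is $d$ and its interaction depth is the number of interaction layers. $d_{\mathrm{swap}}(G)$ denotes the minimum swap depth over all swap networks for $G$. *)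

(* Defs.v *)
From mathcomp Require Import all_boot.
Set Implicit Arguments. Unset Strict Implicit. Unset Printing Implicit Defensive.

(* A finite graph G = (V, E): V a finType, E : rel V (an edge {v,w} is present
   iff E v w; for K_n, E := fun v w => v != w).  Positions are 0..#|V|-1 (nat). *)

Definition is_config (V : finType) (pi : V -> nat) : Prop :=
  injective pi /\ (forall v, pi v < #|V|).

(* A swap layer is represented by the list of left endpoints i of its pairs
   {i, i+1}; pairs must be pairwise disjoint and inside the line. *)
Definition valid_swap_layer (n : nat) (L : seq nat) : Prop :=
  (forall i, i \in L -> i.+1 < n) /\
  (forall i j, i \in L -> j \in L -> i != j -> i.+1 < j \/ j.+1 < i).

Definition swap_pos (L : seq nat) (p : nat) : nat :=
  if p \in L then p.+1
  else if (0 < p) && (p.-1 \in L) then p.-1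
  else p.

Definition apply_layer (V : Type) (L : seq nat) (pi : V -> nat) : V -> nat :=
  fun v => swap_pos L (pi v).

Definition config_at (V : Type) (pi0 : V -> nat) (Ls : seq (seq nat)) (t : nat)
  : V -> nat :=
  foldl (fun pi L => apply_layer L pi) pi0 (take t Ls).

Definition valid_interaction_layer (V : finType) (E : rel V) (pi : V -> nat)
    (I : seq (V * V)) : Prop :=
  (forall p, p \in I -> E p.1 p.2 /\ (pi p.1 = (pi p.2).+1 \/ pi p.2 = (pi p.1).+1)) /\
  uniq (flatten [seq [:: p.1; p.2] | p <- I]).

(* A swap network: initial configuration, swap layers L_1..L_d, and interaction
   layers, each attached to a time t (meaning configuration pi_t, 0 <= t <= d). *)
Record swap_network (V : Type) := SwapNetwork {
  sn_init : V -> nat;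
  sn_swaps : seq (seq nat);
  sn_inter : seq (nat * seq (V * V))
}.

Definition swap_depth (V : Type) (N : swap_network V) : nat := size (sn_swaps N).
Definition interaction_depth (V : Type) (N : swap_network V) : nat :=
  size (sn_inter N).

Definition is_swap_network (V : finType) (E : rel V) (N : swap_network V) : Prop :=
  is_config (sn_init N) /\
  (forall L, L \in sn_swaps N -> valid_swap_layer #|V| L) /\
  (forall tI, tI \in sn_inter N ->
      tI.1 <= size (sn_swaps N) /\
      valid_interaction_layer E (config_at (sn_init N) (sn_swaps N) tI.1) tI.2) /\
  (forall v w, E v w ->
      exists2 tI, tI \in sn_inter N & ((v, w) \in tI.2) || ((w, v) \in tI.2)).

Definition dswap_is (V : finType) (E : rel V) (d : nat) : Prop :=
  (exists N, is_swap_network E N /\ swap_depth N = d) /\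
  (forall N, is_swap_network E N -> d <= swap_depth N).

Definition K_edge (n : nat) : rel 'I_n := fun v w => v != w.

(* Main.v *)
Require Import Defs.
From mathcomp Require Import all_boot zify.
Set Implicit Arguments. Unset Strict Implicit. Unset Printing Implicit Defensive.

Lemma config_at0 (V : Type) (pi : V -> nat) Ls : config_at pi Ls 0 = pi.
Proof. by rewrite /config_at take0. Qed.

Lemma config_atS (V : Type) (pi : V -> nat) Ls t : t < size Ls ->
  config_at pi Ls t.+1 = apply_layer (nth [::] Ls t) (config_at pi Ls t).
Proof. by move=> ht; rewrite /config_at (take_nth [::] ht) -cats1 foldl_cat. Qed.

Lemma swap_pos_le L p : swap_pos L p <= p.+1 /\ p <= (swap_pos L p).+1.
Proof. rewrite /swap_pos; case: ifP => _; first lia. case: ifP => /= h; lia. Qed.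

Lemma swap_pos_inj L :
  (forall i j, i \in L -> j \in L -> i != j -> i.+1 < j \/ j.+1 < i) ->
  injective (swap_pos L).
Proof.
move=> D.
have B x y : (x \in L) && (y \in L) ==> (x == y) || (x.+1 < y) || (y.+1 < x).
  apply/implyP => /andP[hx hy]; case: eqP => //= /eqP ne.
  by case: (D _ _ hx hy ne) => ->; rewrite ?orbT.
have C x y : (x == y) ==> ((x \in L) == (y \in L)).
  by apply/implyP => /eqP ->.
move=> p q; rewrite /swap_pos.
have := C p q; have := C p q.-1; have := C p.-1 q; have := C p.-1 q.-1;
have := C p p.-1; have := C q q.-1.
have := B p q; have := B p q.-1; have := B p.-1 q; have := B p.-1 q.-1;
have := B p p.-1; have := B q q.-1.
case: (p \in L); case: (q \in L); case: (p.-1 \in L); case: (q.-1 \in L) => /=;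
  case E1: (0 < p); case E2: (0 < q) => /=; lia.
Qed.

Lemma swap_pos_lt L n p : (forall i, i \in L -> i.+1 < n) -> p < n -> swap_pos L p < n.
Proof.
move=> H hp; rewrite /swap_pos; case: ifP => [/H //|_]; case: ifP => _ //; lia.
Qed.

Lemma config_at_config (V : finType) (pi : V -> nat) Ls t :
  is_config pi -> (forall L, L \in Ls -> valid_swap_layer #|V| L) ->
  is_config (config_at pi Ls t).
Proof.
move=> [i0 b0] HL; elim: t => [|t [it bt]]; first by rewrite config_at0.
case: (ltnP t (size Ls)) => ht.
  rewrite config_atS //; have [H1 H2] := HL _ (mem_nth [::] ht); split.
    by move=> x y /(swap_pos_inj H2) /it.
  by move=> v; apply: swap_pos_lt.
by rewrite /config_at !take_oversize ?(leq_trans ht) // in it bt *; split.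
Qed.

Lemma config_surj (V : finType) (pi : V -> nat) p :
  is_config pi -> p < #|V| -> exists v, pi v = p.
Proof.
move=> [i b] hp.
pose g (v : V) : 'I_#|V| := Ordinal (b v).
have gi : injective g by move=> x y [] /i.
have gi' : injective (fun j : 'I_#|V| => g (enum_val j)).
  by move=> x y /= e; apply: (can_inj enum_valK); apply: gi.
have := injF_bij gi' => -[h gh hg].
exists (enum_val (h (Ordinal hp))); by have := hg (Ordinal hp) => /(congr1 val).
Qed.

Section Pigeon.
Variables (T : finType) (k : nat) (A : {set T}) (R : T -> 'I_k -> bool).
Hypothesis Hex : forall x, x \in A -> exists j, R x j.
Hypothesis Huq : forall x y j, x \in A -> y \in A -> R x j -> R y j -> x = y.

Let J x := [pick j | R x j].

Let JS x : x \in A -> exists2 j, J x = Some j & R x j.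
Proof.
move=> xA; rewrite /J; case: pickP => [j hj|h]; first by exists j.
by have [j hj] := Hex xA; rewrite h in hj.
Qed.

Let Jinj : {in A &, injective J}.
Proof.
move=> x y xA yA; have [j -> hj] := JS xA; have [j' -> hj'] := JS yA.
by case=> e; subst j'; apply: Huq hj hj'.
Qed.

Let Jsub : J @: A \subset Some @: [set: 'I_k].
Proof.
apply/subsetP => o /imsetP [x xA ->]; have [j -> _] := JS xA.
by apply/imsetP; exists j.
Qed.

Let cardS : #|Some @: [set: 'I_k]| = k.
Proof. by rewrite card_imset ?cardsT ?card_ord //; move=> a b []. Qed.

Lemma pigeon : #|A| <= k.
Proof. rewrite -(card_in_imset Jinj); apply: leq_trans (subset_leq_card Jsub) _; by rewrite cardS. Qed.

Lemma pigeon_eq : #|A| = k ->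
  (forall j, exists2 x, x \in A & R x j) /\
  (forall x j j', x \in A -> R x j -> R x j' -> j = j').
Proof.
move=> hk.
have E : J @: A = Some @: [set: 'I_k].
  by apply/eqP; rewrite eqEcard Jsub /= cardS (card_in_imset Jinj) hk.
have surj j : exists2 x, x \in A & J x = Some j.
  have : Some j \in J @: A by rewrite E; apply/imsetP; exists j.
  by case/imsetP => x xA e; exists x.
have HJ x j : J x = Some j -> R x j.
  by rewrite /J; case: pickP => [j' hj' [<-] | //].
split.
  by move=> j; have [x xA /HJ] := surj j; exists x.
move=> x j j' xA hj hj'.
have [y yA /[dup] ey /HJ hy] := surj j; have [y' yA' /[dup] ey' /HJ hy'] := surj j'.
have e1 := Huq xA yA hj hy; have e2 := Huq xA yA' hj' hy'.
by subst; move: ey'; rewrite ey => -[].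
Qed.
End Pigeon.

Definition flat (V : Type) (I : seq (V * V)) := flatten [seq [:: p.1; p.2] | p <- I].

Definition mem_e (V : eqType) (I : seq (V * V)) v x := ((v, x) \in I) || ((x, v) \in I).

Lemma mem_flat (V : eqType) (I : seq (V * V)) a b :
  (a, b) \in I -> (a \in flat I) && (b \in flat I).
Proof.
elim: I => [//|p I IH]; rewrite in_cons /flat /= !in_cons => /orP[/eqP <-|/IH /andP[h1 h2]] /=.
  by rewrite !eqxx orbT.
by rewrite /flat in h1 h2; rewrite h1 h2 !orbT.
Qed.

Lemma mem_e_flat (V : eqType) (I : seq (V * V)) v x : mem_e I v x -> v \in flat I.
Proof. by case/orP => /mem_flat /andP[]. Qed.

Lemma mem_e_sym (V : eqType) (I : seq (V * V)) v x : mem_e I v x = mem_e I x v.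
Proof. by rewrite /mem_e orbC. Qed.

Lemma pair_uniq (V : eqType) (I : seq (V * V)) p q v :
  uniq (flat I) -> p \in I -> q \in I -> (v == p.1) || (v == p.2) ->
  (v == q.1) || (v == q.2) -> p = q.
Proof.
have G r w : r \in I -> (w == r.1) || (w == r.2) -> w \in flat I.
  by case: r => c d /mem_flat /andP[h1 h2] /orP[] /eqP ->.
elim: I G => [//|[a b] I IH] G; rewrite /flat /= -/(flat I) => /andP[].
rewrite in_cons negb_or => /andP[ab aF] /andP[bF U].
have G' r w : r \in I -> (w == r.1) || (w == r.2) -> w \in flat I.
  by case: r => c d /mem_flat /andP[h1 h2] /orP[] /eqP ->.
rewrite !in_cons => /orP[/eqP->|pI] /orP[/eqP->|qI] //=.
- move=> /orP[] /eqP -> hq; have := G' _ _ qI hq.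
    by rewrite (negbTE aF).
  by rewrite (negbTE bF).
- move=> hp /orP[] /eqP e; subst v; have := G' _ _ pI hp.
    by rewrite (negbTE aF).
  by rewrite (negbTE bF).
- by apply: IH.
Qed.

Lemma partner_uniq (V : eqType) (I : seq (V * V)) v x y :
  uniq (flat I) -> mem_e I v x -> mem_e I v y -> x = y.
Proof.
move=> U /orP[] h1 /orP[] h2; have := pair_uniq (v:=v) U h1 h2; rewrite /= ?eqxx ?orbT => /(_ isT isT).
- by case.
- by case=> -> ->.
- by case=> -> ->.
- by case.
Qed.

Lemma flatP (V : eqType) (I : seq (V * V)) w :
  w \in flat I -> exists2 q, q \in I & (w == q.1) || (w == q.2).
Proof.
elim: I => [//|p I IH]; rewrite /flat /= -/(flat I) !in_cons => /orP[h|/orP[h|/IH[q qI hq]]].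
- by exists p; rewrite ?in_cons ?eqxx ?h.
- by exists p; rewrite ?in_cons ?eqxx ?h ?orbT.
- by exists q; rewrite ?in_cons ?qI ?orbT.
Qed.

Lemma uniq_flat_gen (V : eqType) (I : seq (V * V)) :
  uniq I -> (forall p, p \in I -> p.1 != p.2) ->
  (forall p q w, p \in I -> q \in I -> (w == p.1) || (w == p.2) ->
      (w == q.1) || (w == q.2) -> p = q) ->
  uniq (flat I).
Proof.
elim: I => [//|p I IH] /= /andP[pI U] D S.
rewrite /flat /= -/(flat I) in_cons negb_or D ?mem_head //=.
have nf w : (w == p.1) || (w == p.2) -> w \notin flat I.
  move=> hw; apply/negP => /flatP [q qI hq].
  have qI' : q \in p :: I by rewrite in_cons qI orbT.
  have e := S p q w (mem_head _ _) qI' hw hq.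
  by subst q; rewrite qI in pI.
rewrite nf ?eqxx ?orbT //= nf ?eqxx ?orbT //=.
apply: IH => // [q qI|q r w qI rI]; first by apply: D; rewrite in_cons qI orbT.
by apply: S; rewrite in_cons ?qI ?rI orbT.
Qed.

Definition lay (V : Type) (N : swap_network V) (j : nat) := nth (0, [::]) (sn_inter N) j.

Lemma lay_valid n (N : swap_network 'I_n) j : is_swap_network (@K_edge n) N ->
  j < interaction_depth N ->
  (lay N j).1 <= size (sn_swaps N) /\
  valid_interaction_layer (@K_edge n) (config_at (sn_init N) (sn_swaps N) (lay N j).1) (lay N j).2.
Proof. by move=> [_ [_ [H _]]] hj; apply: H; apply: mem_nth. Qed.

Lemma lay_uniq n (N : swap_network 'I_n) j : is_swap_network (@K_edge n) N ->
  j < interaction_depth N -> uniq (flat (lay N j).2).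
Proof. by move=> H hj; have [_ [_ ]] := lay_valid H hj. Qed.

Lemma lay_cover n (N : swap_network 'I_n) v x : is_swap_network (@K_edge n) N ->
  v != x -> exists2 j, j < interaction_depth N & mem_e (lay N j).2 v x.
Proof.
move=> [_ [_ [_ H]]] vx; have [tI tIin h] := H v x vx.
exists (index tI (sn_inter N)); first by rewrite /interaction_depth index_mem.
by rewrite /lay nth_index.
Qed.

Lemma per_vertex n (N : swap_network 'I_n) v : is_swap_network (@K_edge n) N ->
  n.-1 <= interaction_depth N /\
  (interaction_depth N = n.-1 ->
    (forall j, j < interaction_depth N -> exists x, mem_e (lay N j).2 v x) /\
    (forall x j j', j < interaction_depth N -> j' < interaction_depth N ->
        mem_e (lay N j).2 v x -> mem_e (lay N j').2 v x -> j = j')).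
Proof.
move=> HN.
set k := interaction_depth N.
pose A := [set~ v].
pose R (x : 'I_n) (j : 'I_k) := mem_e (lay N j).2 v x.
have cA : #|A| = n.-1 by rewrite cardsC1 card_ord.
have Hex x : x \in A -> exists j, R x j.
  rewrite !inE => xv; have xv' : v != x by rewrite eq_sym.
  have [j hj hm] := lay_cover HN xv'.
  by exists (Ordinal hj).
have Huq x y (j : 'I_k) : x \in A -> y \in A -> R x j -> R y j -> x = y.
  by move=> _ _; apply: partner_uniq; apply: lay_uniq.
split; first by rewrite -cA; apply: (pigeon Hex Huq).
move=> hk; have [S U] := pigeon_eq Hex Huq (etrans cA (esym hk)).
split.
  by move=> j hj; have [x _ hx] := S (Ordinal hj); exists x.
move=> x j j' hj hj' h1 h2.
have xA : x \in A.
  rewrite !inE; apply/negP => /eqP e; subst x.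
  have [_ [H _]] := lay_valid HN hj.
  by move: h1 => /orP[] /H [] /=; rewrite /K_edge eqxx.
have := U x (Ordinal hj) (Ordinal hj') xA h1 h2; by case.
Qed.

Lemma size_flat (V : Type) (I : seq (V * V)) : size (flat I) = (size I).*2.
Proof. by elim: I => //= p I IH; rewrite /flat /= -/(flat I) IH doubleS. Qed.

Lemma part_ii n (N : swap_network 'I_n) : 2 <= n -> odd n ->
  is_swap_network (@K_edge n) N -> n <= interaction_depth N.
Proof.
move=> hn on HN.
have n0 : 0 < n by lia.
have [h1 h2] := per_vertex (Ordinal n0) HN.
case: (ltnP n.-1 (interaction_depth N)) => hk; first by lia.
have ek : interaction_depth N = n.-1 by lia.
have j0 : 0 < interaction_depth N by rewrite ek; case: n hn {n0 N HN h1 h2 hk ek} on => // [[]].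
have all_in v : v \in flat (lay N 0).2.
  have [h1' h2'] := per_vertex v HN.
  have [x hx] := (h2' ek).1 0 j0.
  exact: mem_e_flat hx.
have U := lay_uniq HN j0.
have : #|flat (lay N 0).2| = size (flat (lay N 0).2) by apply/card_uniqP.
rewrite eq_cardT // size_enum_ord size_flat => e.
by move: on; rewrite [in odd n]e odd_double.
Qed.

Lemma part_iii_low n (N : swap_network 'I_n) : 2 <= n ->
  is_swap_network (@K_edge n) N -> n - 1 <= interaction_depth N.
Proof.
move=> hn HN; have n0 : 0 < n by lia.
have [h1 _] := per_vertex (Ordinal n0) HN; lia.
Qed.

Lemma net_config n (N : swap_network 'I_n) t : is_swap_network (@K_edge n) N ->
  is_config (config_at (sn_init N) (sn_swaps N) t).
Proof. by move=> [H1 [H2 _]]; apply: config_at_config. Qed.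

Lemma net_step n (N : swap_network 'I_n) t v : t < size (sn_swaps N) ->
  config_at (sn_init N) (sn_swaps N) t.+1 v =
  swap_pos (nth [::] (sn_swaps N) t) (config_at (sn_init N) (sn_swaps N) t v).
Proof. by move=> ht; rewrite config_atS. Qed.

Lemma lay_adj n (N : swap_network 'I_n) j v x : is_swap_network (@K_edge n) N ->
  j < interaction_depth N -> mem_e (lay N j).2 v x ->
  let pi := config_at (sn_init N) (sn_swaps N) (lay N j).1 in
  pi v = (pi x).+1 \/ pi x = (pi v).+1.
Proof.
move=> HN hj hm /=; have [_ [H _]] := lay_valid HN hj.
by case/orP: hm => /H [_ /=] [] ->; [left|right|right|left].
Qed.

Lemma dswap_low n (N : swap_network 'I_n) : 2 <= n ->
  is_swap_network (@K_edge n) N -> n - 2 <= swap_depth N.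
Proof.
move=> hn HN; have n0 : 0 < n by lia.
set d := swap_depth N.
pose pi t := config_at (sn_init N) (sn_swaps N) t.
have [a a0] : exists a, pi 0 a = 0.
  by have := config_surj (net_config 0 HN) (_ : 0 < #|'I_n|); rewrite card_ord; apply.
have cross x t : t <= d -> pi t x < pi t a -> exists2 s, s <= d & pi s x = (pi s a).+1.
  elim: t => [|t IH] ht; first by rewrite a0.
  move=> h'; case: (ltnP (pi t x) (pi t a)) => h; first by apply: IH => //; lia.
  have hx := swap_pos_le (nth [::] (sn_swaps N) t) (pi t x).
  have ha := swap_pos_le (nth [::] (sn_swaps N) t) (pi t a).
  have ht' : t < size (sn_swaps N) by move: ht; rewrite /d /swap_depth.
  rewrite /pi !(net_step _ ht') -/(pi t) in h'.
  exists t; first by lia.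
  have [inj _] := net_config t HN.
  have : pi t x != pi t a by apply/eqP => /inj e; subst x; lia.
  lia.
have Hex x : x \in [set~ a] -> exists j : 'I_d.+1, pi j x == (pi j a).+1.
  rewrite !inE => xa; have ax : a != x by rewrite eq_sym.
  have [j hj hm] := lay_cover HN ax.
  have [ht _] := lay_valid HN hj.
  case: (lay_adj HN hj hm) => h.
    have hlt : pi (lay N j).1 x < pi (lay N j).1 a by rewrite /pi h.
    have [s hs e] := cross x _ ht hlt.
    by exists (Ordinal (hs : s < d.+1)); apply/eqP.
  by exists (Ordinal (ht : (lay N j).1 < d.+1)); apply/eqP.
have Huq x y (j : 'I_d.+1) : x \in [set~ a] -> y \in [set~ a] ->
    pi j x == (pi j a).+1 -> pi j y == (pi j a).+1 -> x = y.
  move=> _ _ /eqP h1 /eqP h2; have [inj _] := net_config j HN.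
  by apply: inj; move: h1 h2; rewrite /pi => -> ->.
have := pigeon Hex Huq; rewrite cardsC1 card_ord; lia.
Qed.

Section Iii.
Variables (n : nat) (N : swap_network 'I_n).
Hypothesis hn : 2 < n.
Hypothesis HN : is_swap_network (@K_edge n) N.
Hypothesis hd : swap_depth N = n - 2.
Hypothesis hk : interaction_depth N = n - 1.

Let d := swap_depth N.
Let k := interaction_depth N.
Let pi t := config_at (sn_init N) (sn_swaps N) t.

Let hk' : k = n.-1. Proof. rewrite /k hk; lia. Qed.

Let contains v j : j < k -> exists x, mem_e (lay N j).2 v x.
Proof. by have [_ /(_ hk')[H _]] := per_vertex v HN; apply: H. Qed.

Let edge_uq v x j j' : j < k -> j' < k ->
  mem_e (lay N j).2 v x -> mem_e (lay N j').2 v x -> j = j'.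
Proof. by have [_ /(_ hk')[_ H]] := per_vertex v HN; apply: H. Qed.

Let partner v j : j < k -> exists x, mem_e (lay N j).2 v x /\
  (pi (lay N j).1 v = (pi (lay N j).1 x).+1 \/ pi (lay N j).1 x = (pi (lay N j).1 v).+1).
Proof.
move=> hj; have [x hx] := contains v hj; exists x; split => //.
exact: lay_adj HN hj hx.
Qed.

Let inj t : injective (pi t). Proof. by have [] := net_config t HN. Qed.
Let bnd t v : pi t v < n. Proof. by have [_ H] := net_config t HN; move: (H v); rewrite card_ord. Qed.
Let surj t p : p < n -> exists v, pi t v = p.
Proof. by move=> hp; apply: config_surj (net_config t HN) _; rewrite card_ord. Qed.

Let one_per_time j j' : j < k -> j' < k -> (lay N j).1 = (lay N j').1 -> j = j'.
Proof.
move=> hj hj' e.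
have n0 : 0 < n by lia.
have [c c0] := surj (lay N j).1 n0.
have [x [hx ax]] := partner c hj; have [x' [hx' ax']] := partner c hj'.
rewrite -e in ax'.
have ex : x = x' by apply: (inj (t := (lay N j).1)); lia.
by subst x'; apply: (edge_uq hj hj' hx hx').
Qed.

Let every_time t : t <= d -> exists2 j, j < k & (lay N j).1 = t.
Proof.
move=> ht.
pose R (j : 'I_k) (s : 'I_d.+1) := (lay N j).1 == s.
have Hex j : j \in [set: 'I_k] -> exists s, R j s.
  move=> _; have [h _] := lay_valid HN (ltn_ord j).
  by exists (Ordinal (h : (lay N j).1 < d.+1)); rewrite /R.
have Huq j j' s : j \in [set: 'I_k] -> j' \in [set: 'I_k] -> R j s -> R j' s -> j = j'.
  move=> _ _ /eqP h /eqP h'; apply: val_inj.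
  by apply: one_per_time; [exact: ltn_ord | exact: ltn_ord | rewrite h h'].
have cA : #|[set: 'I_k]| = d.+1 by rewrite cardsT card_ord hk' /d hd; lia.
have [S _] := pigeon_eq Hex Huq cA.
have [j _ /eqP e] := S (Ordinal (ht : t < d.+1)); by exists j.
Qed.

Let stuck t e f : t < d ->
  (forall s x, s <= d -> (pi s x).+1 = e \/ pi s x = e.+1 -> pi s x = f) ->
  forall v, pi t v = e -> pi t.+1 v = f -> (forall w, pi t w = f -> pi t.+1 w = e) -> False.
Proof.
move=> ht Hf v ve vf Hw.
have [j hj ej] := every_time (ltnW ht).
have [j' hj' ej'] := every_time (ht : t.+1 <= d).
have [w [hw aw]] := partner v hj; rewrite ej in aw.
have wf : pi t w = f by apply: Hf; [lia | lia].
have we := Hw _ wf.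
have [y [hy ay]] := partner w hj'; rewrite ej' in ay.
have yf : pi t.+1 y = f by apply: Hf; [lia | lia].
have yv : y = v by apply: (inj (t := t.+1)); rewrite yf vf.
subst y; rewrite mem_e_sym in hw.
have := edge_uq hj hj' hw hy => jj; subst j'.
by move: ej'; rewrite ej => /n_Sn.
Qed.

Lemma iii_contra : False.
Proof.
have n0 : 0 < n by lia.
have n1 : n.-1 < n by lia.
have [a a0] := surj 0 n0.
have [b b0] := surj 0 n1.
have ends t : t <= d -> pi t a = 0 /\ pi t b = n.-1.
  elim: t => [|t IH] ht; first by [].
  have ht' : t < size (sn_swaps N) by move: ht; rewrite /d /swap_depth.
  have [pa pb] := IH (ltnW ht).
  have [_ [HL _]] := HN.
  have [Lb Ld] := HL _ (mem_nth [::] ht').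
  rewrite card_ord in Lb.
  set L := nth [::] (sn_swaps N) t in Lb Ld.
  have st v : pi t.+1 v = swap_pos L (pi t v) by rewrite /pi net_step.
  have n1L : n.-1 \notin L by apply/negP => /Lb; lia.
  split.
    case: (boolP (0 \in L)) => h0.
      exfalso; apply: (stuck (e := 0) (f := 1) ht _ pa).
      - by move=> s x _; lia.
      - by rewrite st pa /swap_pos h0.
      - move=> w wf; rewrite st wf /swap_pos.
        have -> : (1 \in L) = false.
          by apply/negP => h1; have := Ld _ _ h0 h1 isT; lia.
        by rewrite h0.
    by rewrite st pa /swap_pos (negbTE h0).
  case: (boolP (n.-2 \in L)) => h2.
    exfalso; apply: (stuck (e := n.-1) (f := n.-2) ht _ pb).
    - by move=> s x _; have := bnd s x; lia.
    - have p1 : 0 < n.-1 by lia.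
      by rewrite st pb /swap_pos (negbTE n1L) h2 p1.
    - move=> w wf; rewrite st wf /swap_pos h2; lia.
  by rewrite st pb /swap_pos (negbTE n1L) (negbTE h2) andbF.
have ab : a != b by apply/eqP => e; subst b; move: a0; rewrite b0; lia.
have [j hj hm] := lay_cover HN ab.
have [ht _] := lay_valid HN hj.
have [pa pb] := ends _ ht.
have := lay_adj HN hj hm; rewrite /= -/(pi _) pa pb; lia.
Qed.
End Iii.

Definition rr m k t := if k.*2 + t < m.*2 then k.*2 + t else k.*2 + t - m.*2.
Definition refl m r := if r < m then r else m.*2 - 1 - r.
Definition P m k t := refl m (rr m k t).

Definition lay_sw s m t :=
  [seq x <- iota 0 (s + m) | (s <= x) && (x - s + 1 < m) && ((x - s) %% 2 == t %% 2)].

Ltac crunch := rewrite /P /refl /rr;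
  repeat (match goal with |- context [if ?c then _ else _] =>
    lazymatch c with context [if _ then _ else _] => fail | _ =>
      let E := fresh "E" in case E: c; rewrite /= end end); lia.

Lemma P_lt m k t : k < m -> t < m.*2 -> P m k t < m.
Proof. move=> h1 h2; crunch. Qed.

Lemma P_step s m k t : k < m -> t.+1 < m.*2 ->
  swap_pos (lay_sw s m t) (s + P m k t) = s + P m k t.+1.
Proof.
move=> hk ht; rewrite /swap_pos /lay_sw !mem_filter !mem_iota; crunch.
Qed.

Lemma P_step0 m t : swap_pos (lay_sw 1 m t) 0 = 0.
Proof. by rewrite /swap_pos /lay_sw mem_filter. Qed.

Lemma P_adjA m k l t : k < m -> l < m -> k != l -> t < m.*2 ->
  ((k + l + t).+1 == m) || ((k + l + t).+1 == m.*2) || ((k + l + t).+1 == m * 3) ->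
  P m k t = (P m l t).+1 \/ P m l t = (P m k t).+1.
Proof. move=> *; crunch. Qed.

Lemma P_adjB m k l t : k < m -> l < m -> k != l -> t < m.*2 ->
  (k + l + t == m) || (k + l + t == m.*2) || (k + l + t == m * 3) ->
  P m k t = (P m l t).+1 \/ P m l t = (P m k t).+1.
Proof. move=> *; crunch. Qed.

Lemma P0_inj m k l : k < m -> l < m -> P m k 0 = P m l 0 -> k = l.
Proof. move=> h1 h2; crunch. Qed.

Lemma P_zero m k t : k < m -> t < m.*2 -> (k.*2 + t == 0) || (k.*2 + t == m.*2) -> P m k t = 0.
Proof. move=> *; crunch. Qed.

Definition Q s m (v : nat) t := if v < m then s + P m v t else 0.

Definition mk_net n s m D (I : seq (nat * seq ('I_n * 'I_n))) : swap_network 'I_n :=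
  SwapNetwork (fun v : 'I_n => Q s m v 0) [seq lay_sw s m t | t <- iota 0 D] I.

Lemma mk_config n s m D I t (v : 'I_n) :
  (forall v : 'I_n, m <= v -> s = 1) -> D < m.*2 -> t <= D ->
  config_at (sn_init (mk_net s m D I)) (sn_swaps (mk_net s m D I)) t v = Q s m v t.
Proof.
move=> Hs hD; elim: t => [|t IH] ht; first by rewrite config_at0.
have ht' : t < size (sn_swaps (mk_net s m D I)) by rewrite /= size_map size_iota.
rewrite config_atS // /apply_layer IH ?(ltnW ht) //.
rewrite (nth_map 0) ?size_iota // nth_iota // add0n /Q.
case: ifP => hv; first by apply: P_step => //; lia.
by rewrite (Hs v) ?P_step0 //; lia.
Qed.

Lemma enum_layer_valid n (pi : 'I_n -> nat) (Pr : 'I_n -> 'I_n -> bool) :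
  (forall u v, Pr u v -> u < v) ->
  (forall u v, Pr u v -> pi u = (pi v).+1 \/ pi v = (pi u).+1) ->
  (forall u v u' v' w, Pr u v -> Pr u' v' -> (w == u) || (w == v) ->
     (w == u') || (w == v') -> u = u' /\ v = v') ->
  valid_interaction_layer (@K_edge n) pi (enum [set p | Pr p.1 p.2]).
Proof.
move=> H1 H2 H3; split.
  move=> [u v]; rewrite mem_enum inE /= => h; split; last exact: H2.
  by rewrite /K_edge neq_ltn H1.
apply: uniq_flat_gen; first exact: enum_uniq.
  by move=> [u v]; rewrite mem_enum inE /= => /H1; rewrite neq_ltn => ->.
move=> [u v] [u' v'] w; rewrite !mem_enum !inE /= => h h' hw hw'.
by have [-> ->] := H3 _ _ _ _ _ h h' hw hw'.
Qed.

Lemma mk_net_ok n s m D I :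
  n = s + m -> s <= 1 -> (forall v : 'I_n, m <= v -> s = 1) -> D < m.*2 ->
  (forall tI, tI \in I -> tI.1 <= D /\
     valid_interaction_layer (@K_edge n) (fun v : 'I_n => Q s m v tI.1) tI.2) ->
  (forall v w : 'I_n, v != w -> exists2 tI, tI \in I & mem_e tI.2 v w) ->
  is_swap_network (@K_edge n) (mk_net s m D I).
Proof.
move=> hn hs Hs hD HI HC; split; [|split; [|split]].
- split.
    move=> v w /= e; apply: ord_inj; move: e; rewrite /Q.
    case: ifP => hv; case: ifP => hw.
    + by move=> /addnI /P0_inj; apply.
    + by have := Hs w; lia.
    + by have := Hs v; lia.
    + have := ltn_ord v; have := ltn_ord w; lia.
  move=> v /=; rewrite card_ord /Q; case: ifP => hv; last by lia.
  have := @P_lt m v 0; lia.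
- move=> L /mapP [t _ ->]; rewrite card_ord; split.
    by move=> i; rewrite mem_filter mem_iota; lia.
  by move=> i j; rewrite !mem_filter !mem_iota; lia.
- move=> tI htI; have [h1 h2] := HI _ htI; split; first by rewrite /= size_map size_iota.
  case: h2 => h2 h3; split => // p hp; have [h4 h5] := h2 p hp; split => //.
  by rewrite !mk_config.
- move=> v w; rewrite /K_edge => vw; have [tI h1 h2] := HC v w vw; by exists tI.
Qed.

Ltac split_ifs := repeat (match goal with |- context [if ?c then _ else _] =>
    lazymatch c with context [if _ then _ else _] => fail | _ =>
      let E := fresh "E" in case E: c; rewrite /= end end).

Ltac elim_w := repeat match goal with
  | H : is_true ((_ == _) || (_ == _)) |- _ => case/orP: H => /eqP H; subst
  end.

Ltac ob := repeat match goal with x : 'I_?k |- _ =>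
  lazymatch goal with _ : is_true (nat_of_ord x < k) |- _ => fail | _ =>
    let h := fresh "hb" in have h := ltn_ord x end end.

Section PartI.
Variable n : nat.
Hypothesis hn : 2 <= n.

Definition PrB (u v : 'I_n) := (u < v) && (u + v == n).
Definition PrA t (u v : 'I_n) := (u < v) &&
  (((u + v + t).+1 == n) || ((u + v + t).+1 == n.*2) || ((u + v + t).+1 == n * 3)).

Definition I1 : seq (nat * seq ('I_n * 'I_n)) :=
  (0, enum [set p | PrB p.1 p.2]) :: [seq (t, enum [set p | PrA t p.1 p.2]) | t <- iota 0 n.-1].

Definition N1 := mk_net 0 n (n - 2) I1.

Lemma N1_ok : is_swap_network (@K_edge n) N1.
Proof.
apply: mk_net_ok => //.
- by move=> v; have := ltn_ord v; lia.
- lia.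
- move=> tI; rewrite in_cons => /orP[/eqP ->|/mapP [t]]; rewrite /=.
    split; first by [].
    apply: enum_layer_valid.
    + by move=> u v /andP[].
    + move=> u v /andP[h1 h2]; rewrite /= /Q !ltn_ord !add0n.
      have := ltn_ord u; have := ltn_ord v; move=> *; apply: P_adjB; lia.
    + move=> u v u' v' w /andP[h1 h2] /andP[h1' h2'] hw hw'; elim_w;
        split; apply: ord_inj; ob; lia.
  rewrite mem_iota => ht ->; split; first by rewrite /=; lia.
  apply: enum_layer_valid.
  + by move=> u v /andP[].
  + move=> u v /andP[h1 h2]; rewrite /= /Q !ltn_ord !add0n.
    have := ltn_ord u; have := ltn_ord v; move=> *; apply: P_adjA; lia.
  + move=> u v u' v' w /andP[h1 h2] /andP[h1' h2'] hw hw'; elim_w;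
      split; apply: ord_inj; ob; lia.
- suff H (u v : 'I_n) : u < v -> exists2 tI, tI \in I1 & (u, v) \in tI.2.
    move=> v w; rewrite neq_ltn => /orP[] /H [tI h1 h2]; exists tI => //;
    by rewrite /mem_e h2 ?orbT.
  move=> uv.
  case: (boolP (u + v == n)) => e.
    exists (0, enum [set p | PrB p.1 p.2]); first by rewrite mem_head.
    by rewrite /= mem_enum inE /PrB uv e.
  pose t := if u + v < n then n.-1 - (u + v) else n.*2.-1 - (u + v).
  exists (t, enum [set p | PrA t p.1 p.2]).
    rewrite in_cons; apply/orP; right; apply/mapP; exists t => //.
    rewrite mem_iota /t; have := ltn_ord u; have := ltn_ord v; case: ifP => ?; lia.
  rewrite /= mem_enum inE /PrA uv /t; have := ltn_ord u; have := ltn_ord v.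
  rewrite /=; case: ifP => ?; lia.
Qed.

Lemma N1_depth : swap_depth N1 = n - 2.
Proof. by rewrite /swap_depth /= size_map size_iota. Qed.

Lemma N1_idepth : interaction_depth N1 = n.
Proof. rewrite /interaction_depth /= size_map size_iota; lia. Qed.
End PartI.

Section PartIII.
Variable n : nat.
Hypothesis hn : 2 < n.
Hypothesis he : ~~ odd n.
Let m := n.-1.

Definition PrC t (u v : 'I_n) := (u < v) &&
  (if v == n.-1 :> nat then (u.*2 + t == 0) || (u.*2 + t == (n.-1).*2)
   else (u + v + t == n.-1) || (u + v + t == (n.-1).*2) || (u + v + t == n.-1 * 3)).

Definition I3 : seq (nat * seq ('I_n * 'I_n)) :=
  [seq (j.*2, enum [set p | PrC j.*2 p.1 p.2]) | j <- iota 0 n.-1].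

Definition N3 := mk_net 1 n.-1 ((n.-1).*2 - 2) I3.

Lemma cover3 (u v : nat) : u < v -> v < n.-1 ->
  exists2 j, j < n.-1 & (u + v + j.*2 == n.-1) || (u + v + j.*2 == (n.-1).*2)
      || (u + v + j.*2 == n.-1 * 3).
Proof.
move=> uv vm; set s := u + v.
have mo : odd n.-1 by move: he hn; case: n => //= n' /negbNE.
pose t0 := if s <= n.-1 then (if odd (n.-1 - s) then (n.-1).*2 - s else n.-1 - s)
           else (if odd ((n.-1).*2 - s) then n.-1 * 3 - s else (n.-1).*2 - s).
have ev : ~~ odd t0.
  rewrite /t0; case: ifP => h1; case: ifP => h2 //.
  - rewrite (_ : (n.-1).*2 - s = (n.-1 - s) + n.-1); last by lia.
    by rewrite oddD h2 mo.
  - by rewrite h2.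
  - rewrite (_ : n.-1 * 3 - s = ((n.-1).*2 - s) + n.-1); last by lia.
    by rewrite oddD h2 mo.
  - by rewrite h2.
have := odd_double_half t0; rewrite (negbTE ev) add0n => E.
exists t0./2; move: E; rewrite /t0 /s; case: ifP => ?; case: ifP => ?; lia.
Qed.

Lemma N3_ok : is_swap_network (@K_edge n) N3.
Proof.
apply: mk_net_ok => //.
- lia.
- lia.
- move=> tI /mapP [j]; rewrite mem_iota => hj ->; split; first by rewrite /=; lia.
  apply: enum_layer_valid.
  + by move=> u v /andP[].
  + move=> u v /andP[h1]; rewrite /= /Q; ob.
    case: eqP => hv h2.
      rewrite hv ltnn (_ : u < n.-1) ?P_zero //; lia.
    have hu' : u < n.-1 by lia.
    have hv' : v < n.-1 by lia.
    rewrite hu' hv'; have := @P_adjB n.-1 u v j.*2 hu' hv'; lia.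
  + move=> u v u' v' w /andP[h1 h2] /andP[h1' h2'] hw hw'; elim_w;
      split; apply: ord_inj; ob; move: h2 h2'; split_ifs; lia.
- suff H (u v : 'I_n) : u < v -> exists2 tI, tI \in I3 & (u, v) \in tI.2.
    move=> v w; rewrite neq_ltn => /orP[] /H [tI h1 h2]; exists tI => //;
    by rewrite /mem_e h2 ?orbT.
  move=> uv; ob.
  case: (boolP (v == n.-1 :> nat)) => hv.
    pose j := if u == 0 :> nat then 0 else n.-1 - u.
    exists (j.*2, enum [set p | PrC j.*2 p.1 p.2]).
      apply/mapP; exists j => //; rewrite mem_iota /j; case: ifP => ?; lia.
    rewrite /= mem_enum inE /PrC /= uv hv /j; case: ifP => ?; lia.
  have hv' : v < n.-1 by lia.
  have [j hj hc] := cover3 uv hv'.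
  exists (j.*2, enum [set p | PrC j.*2 p.1 p.2]).
    by apply/mapP; exists j => //; rewrite mem_iota.
  by rewrite /= mem_enum inE /PrC /= uv (negbTE hv).
Qed.

Lemma N3_idepth : interaction_depth N3 = n - 1.
Proof. rewrite /interaction_depth /= size_map size_iota; lia. Qed.
End PartIII.

Theorem lemma1 (n : nat) (hn : 2 <= n) :
  (* (i) *)
  (dswap_is (@K_edge n) (n - 2) /\
   exists N : swap_network 'I_n, is_swap_network (@K_edge n) N /\
     swap_depth N = n - 2 /\ interaction_depth N = n) /\
  (* (ii) *)
  (odd n -> forall N : swap_network 'I_n, is_swap_network (@K_edge n) N ->
     n <= interaction_depth N) /\
  (* (iii) *)
  (~~ odd n -> 2 < n ->
     ((exists N : swap_network 'I_n, is_swap_network (@K_edge n) N /\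
         interaction_depth N = n - 1) /\
      (forall N : swap_network 'I_n, is_swap_network (@K_edge n) N ->
         n - 1 <= interaction_depth N)) /\
     (forall N : swap_network 'I_n, is_swap_network (@K_edge n) N ->
        ~ (swap_depth N = n - 2 /\ interaction_depth N = n - 1))).
Proof.
split; [split; [split|] | split].
- exists (N1 n); split; [exact: N1_ok | exact: N1_depth].
- by move=> N HN; apply: dswap_low.
- exists (N1 n); split; [exact: N1_ok | split; [exact: N1_depth | exact: N1_idepth]].
- by move=> on N HN; apply: part_ii.
move=> ev h2; split; first split.
- exists (N3 n); split; [exact: N3_ok | exact: N3_idepth].
- by move=> N HN; apply: part_iii_low.
- by move=> N HN [hd hk]; apply: (iii_contra h2 HN hd hk).
Qed.
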